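(* For every $1\le q\le\infty$, the pair $(\ell_2^2(\mathbb{R}),\ell_q^2(\mathbb{R}))$ fails the uniform sBPBp.
   Context: $\ell_p^2(\mathbb{R})$ denotes $\mathbb{R}^2$ with the norm $\|(x,y)\|_p=(|x|^p+|y|^p)^{1/p}$ for $p<\infty$ and $\|(x,y)\|_\infty=\max\{|x|,|y|\}$; $S_X$ is the unit sphere of $X$ and $\mathcal{L}(X,Y)$ the bounded linear operators. A pair of Banach spaces $(X,Y)$ has the uniform strong Bishop–Phelps–Bollobás property (uniform sBPBp) if for every $\varepsilon>0$ there exists $\eta(\varepsilon)>0$ such that whenever $T\in\mathcal{L}(X,Y)$ with $\|T\|=1$ and $x_0\in S_X$ satisfy $\|T(x_0)\|>1-\eta(\varepsilon)$, there exists $x_1\in S_X$ with $\|T(x_1)\|=1$ and $\|x_1-x_0\|<\varepsilon$. *)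

(* Defs.v *)
From Stdlib Require Import Reals Lra.
Open Scope R_scope.

Inductive exponent : Type :=
| Fin : R -> exponent
| Inf : exponent.

Definition valid_exponent (p : exponent) : Prop :=
  match p with Fin r => 1 <= r | Inf => True end.

(* a^b for a >= 0, b > 0, with 0^b = 0 (Stdlib's Rpower 0 b is 1). *)
Definition rpow (a b : R) : R :=
  if Rlt_dec 0 a then Rpower a b else 0.

Definition pnorm (p : exponent) (v : R * R) : R :=
  match p with
  | Fin r => rpow (rpow (Rabs (fst v)) r + rpow (Rabs (snd v)) r) (1 / r)
  | Inf => Rmax (Rabs (fst v)) (Rabs (snd v))
  end.

Definition vsub (u v : R * R) : R * R := (fst u - fst v, snd u - snd v).
Definition vadd (u v : R * R) : R * R := (fst u + fst v, snd u + snd v).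
Definition vscal (a : R) (v : R * R) : R * R := (a * fst v, a * snd v).

(* Linear maps R^2 -> R^2 (all are bounded, R^2 being finite-dimensional). *)
Definition is_linear (T : R * R -> R * R) : Prop :=
  (forall u v, T (vadd u v) = vadd (T u) (T v)) /\
  (forall a v, T (vscal a v) = vscal a (T v)).

Definition opnorm_eq (p q : exponent) (T : R * R -> R * R) (c : R) : Prop :=
  is_lub (fun t => exists x, pnorm p x = 1 /\ t = pnorm q (T x)) c.

Definition uniform_sBPBp (p q : exponent) : Prop :=
  forall eps : R, 0 < eps ->
  exists eta : R, 0 < eta /\
    forall (T : R * R -> R * R) (x0 : R * R),
      is_linear T -> opnorm_eq p q T 1 ->
      pnorm p x0 = 1 -> pnorm q (T x0) > 1 - eta ->
      exists x1 : R * R,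
        pnorm p x1 = 1 /\ pnorm q (T x1) = 1 /\ pnorm p (vsub x1 x0) < eps.

(* Main.v *)
Require Import Defs.
From Stdlib Require Import Reals Lra Classical.
Open Scope R_scope.

Lemma Rpower_one_l x : Rpower 1 x = 1.
Proof. unfold Rpower. rewrite ln_1, Rmult_0_r. apply exp_0. Qed.

Lemma rpow_ge0 a b : 0 <= rpow a b.
Proof. unfold rpow. destruct (Rlt_dec 0 a). unfold Rpower. left; apply exp_pos. lra. Qed.

Lemma rpow_0 b : rpow 0 b = 0.
Proof. unfold rpow. destruct (Rlt_dec 0 0); lra. Qed.

Lemma rpow_mul k a s : 0 < k -> 0 <= a -> rpow (k*a) s = Rpower k s * rpow a s.
Proof.
  intros Hk Ha. destruct (Req_dec a 0) as [->|Ha0].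
  - rewrite Rmult_0_r, !rpow_0. ring.
  - unfold rpow. destruct (Rlt_dec 0 (k*a)); destruct (Rlt_dec 0 a); try lra.
    + symmetry; apply Rpower_mult_distr; lra.
    + exfalso; apply n; apply Rmult_lt_0_compat; lra.
Qed.

Lemma pnorm_scal q c v : valid_exponent q -> pnorm q (vscal c v) = Rabs c * pnorm q v.
Proof.
  destruct v as [x y]. destruct q as [r|]; simpl; intros Hr.
  - rewrite !Rabs_mult.
    destruct (Req_dec c 0) as [->|Hc].
    + rewrite Rabs_R0, !Rmult_0_l, !rpow_0, Rplus_0_r, rpow_0. ring.
    + assert (Hk : 0 < Rabs c) by (apply Rabs_pos_lt; auto).
      rewrite !rpow_mul by (auto using Rabs_pos).
      rewrite <- Rmult_plus_distr_l.
      rewrite rpow_mul.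
      * rewrite Rpower_mult. replace (r * (1/r)) with 1 by (field; lra).
        rewrite Rpower_1 by auto. reflexivity.
      * unfold Rpower; apply exp_pos.
      * pose proof (rpow_ge0 (Rabs x) r); pose proof (rpow_ge0 (Rabs y) r); lra.
  - rewrite !Rabs_mult. apply RmaxRmult. apply Rabs_pos.
Qed.

Lemma rpow_sq a : rpow (Rabs a) 2 = a * a.
Proof.
  unfold rpow. destruct (Rlt_dec 0 (Rabs a)).
  - replace 2 with (INR 2) by (simpl; ring). rewrite Rpower_pow by auto.
    simpl. rewrite Rmult_1_r. rewrite <- Rabs_mult. apply Rabs_right.
    nra.
  - assert (a = 0). { destruct (Req_dec a 0); auto. exfalso; apply n, Rabs_pos_lt; auto. }
    subst; ring.
Qed.

Lemma pnorm2 x y : pnorm (Fin 2) (x,y) = sqrt (x*x+y*y).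
Proof.
  simpl. rewrite !rpow_sq. unfold rpow.
  destruct (Rlt_dec 0 (x*x+y*y)).
  - replace (1/2) with (/2) by field. apply Rpower_sqrt; auto.
  - assert (x*x+y*y = 0) by nra. rewrite H, sqrt_0. reflexivity.
Qed.

Lemma pnorm_ge0 q v : 0 <= pnorm q v.
Proof.
  destruct q; simpl. apply rpow_ge0.
  eapply Rle_trans; [apply Rabs_pos | apply Rmax_l].
Qed.

Lemma pnorm_e1 q : valid_exponent q -> pnorm q (1,0) = 1.
Proof.
  destruct q as [r|]; simpl; intros Hr.
  - rewrite Rabs_R0, Rabs_R1, rpow_0, Rplus_0_r.
    unfold rpow. destruct (Rlt_dec 0 1); [|lra]. rewrite Rpower_one_l.
    destruct (Rlt_dec 0 1); [|lra]. apply Rpower_one_l.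
  - rewrite Rabs_R0, Rabs_R1. unfold Rmax; destruct (Rle_dec 1 0); lra.
Qed.

Lemma pnorm_rot q a b : pnorm q (b, -a) = pnorm q (a,b).
Proof.
  destruct q; simpl; rewrite Rabs_Ropp. f_equal; ring. apply Rmax_comm.
Qed.

Lemma rpow_le1 a r : 0 <= r -> Rabs a <= 1 -> rpow (Rabs a) r <= 1.
Proof.
  intros Hr Ha. unfold rpow. destruct (Rlt_dec 0 (Rabs a)); [|lra].
  rewrite <- (Rpower_one_l r). apply Rle_Rpower_l; lra.
Qed.

Lemma pnorm_bound q x y : valid_exponent q -> x*x+y*y = 1 -> pnorm q (x,y) <= 2.
Proof.
  intros Hq Hxy.
  assert (Hx : Rabs x <= 1). { apply Rabs_le. nra. }
  assert (Hy : Rabs y <= 1). { apply Rabs_le. nra. }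
  destruct q as [r|]; simpl in *.
  - pose proof (rpow_le1 x r ltac:(lra) Hx). pose proof (rpow_le1 y r ltac:(lra) Hy).
    set (S := rpow (Rabs x) r + rpow (Rabs y) r).
    unfold rpow at 1. destruct (Rlt_dec 0 S); [|lra].
    apply Rle_trans with (Rpower 2 (1/r)).
    + apply Rle_Rpower_l. apply Rlt_le, Rdiv_lt_0_compat; lra. split; [lra| unfold S; lra].
    + rewrite <- (Rpower_1 2) at 2 by lra. apply Rle_Rpower. lra.
      apply Rmult_le_reg_r with r. lra. replace (1/r*r) with 1 by (field; lra). lra.
  - unfold Rmax; destruct (Rle_dec _ _); lra.
Qed.

Lemma sq_of_norm1 x y : pnorm (Fin 2) (x,y) = 1 -> x*x+y*y = 1.
Proof.
  rewrite pnorm2. intros H. rewrite <- (sqrt_sqrt (x*x+y*y)) by nra. rewrite H; ring.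
Qed.

Lemma norm1_of_sq x y : x*x+y*y = 1 -> pnorm (Fin 2) (x,y) = 1.
Proof. rewrite pnorm2. intros ->. apply sqrt_1. Qed.

Lemma pnorm_zero q : valid_exponent q -> pnorm q (0,0) = 0.
Proof.
  intros Hq. replace (0,0) with (vscal 0 (0,0)) by (unfold vscal; simpl; f_equal; ring).
  rewrite pnorm_scal by auto. rewrite Rabs_R0; ring.
Qed.

Lemma norm_le q M : valid_exponent q ->
  (forall x, pnorm (Fin 2) x = 1 -> pnorm q x <= M) ->
  forall v, pnorm q v <= M * pnorm (Fin 2) v.
Proof.
  intros Hq HM [x y]. set (n := sqrt (x*x+y*y)).
  assert (Hn : n * n = x*x+y*y) by (apply sqrt_sqrt; nra).
  destruct (Req_dec n 0) as [H0|H0].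
  - assert (x = 0) by nra. assert (y = 0) by nra. subst.
    rewrite pnorm_zero by auto. rewrite pnorm2. pose proof (sqrt_pos (0*0+0*0)). 
    replace (0*0+0*0) with 0 by ring. rewrite sqrt_0. lra.
  - assert (Hnp : 0 < n) by (pose proof (sqrt_pos (x*x+y*y)); unfold n in *; lra).
    replace (x,y) with (vscal n (x/n, y/n)) by (unfold vscal; simpl; f_equal; field; lra).
    rewrite pnorm_scal by auto. rewrite (Rabs_right n) by lra.
    assert (H1 : pnorm (Fin 2) (x/n,y/n) = 1).
    { apply norm1_of_sq. replace (x/n*(x/n)+y/n*(y/n)) with ((x*x+y*y)/(n*n)) by (field; lra).
      rewrite Hn. field. nra. }
    pose proof (HM _ H1). rewrite pnorm_scal by (simpl; lra). rewrite H1.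
    rewrite (Rabs_right n) by lra. nra.
Qed.

Theorem mainTheorem10 :
  forall q : exponent, valid_exponent q -> ~ uniform_sBPBp (Fin 2) q.
Proof.
  intros q Hq H.
  set (P := fun t => exists x, pnorm (Fin 2) x = 1 /\ t = pnorm q x).
  assert (Hb : bound P).
  { exists 2. intros t [[x y] [H1 ->]]. apply pnorm_bound; auto. apply sq_of_norm1; auto. }
  assert (He : exists t, P t).
  { exists 1. exists (1,0). split. apply norm1_of_sq; ring. rewrite pnorm_e1; auto. }
  destruct (completeness P Hb He) as [M [HMub HMl]].
  assert (HM1 : 1 <= M).
  { apply HMub. exists (1,0). split. apply norm1_of_sq; ring. rewrite pnorm_e1; auto. }
  assert (HMx : forall x, pnorm (Fin 2) x = 1 -> pnorm q x <= M).
  { intros x Hx. apply HMub. exists x; auto. }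
  pose proof (norm_le q M Hq HMx) as HN.
  destruct (H 1 ltac:(lra)) as [eta [Heta HH]].
  destruct (classic (exists u, pnorm (Fin 2) u = 1 /\ pnorm q u = M)) as [[[a b] [Hu HuM]] | Hno].
  - apply sq_of_norm1 in Hu.
    set (d := Rmin (eta/2) (1/2)).
    assert (Hd1 : 0 < d) by (unfold d; apply Rmin_glb_lt; lra).
    assert (Hd2 : d < eta) by (unfold d; pose proof (Rmin_l (eta/2) (1/2)); lra).
    assert (Hd3 : d <= 1/2) by (unfold d; apply Rmin_r).
    set (D := fun v : R*R => (fst v - d*(fst v*b - snd v*a)*b, snd v + d*(fst v*b - snd v*a)*a)).
    set (T := fun v => vscal (/M) (D v)).
    assert (HDn : forall x y, pnorm (Fin 2) (D (x,y)) =
       sqrt (x*x+y*y - d*(2-d)*((x*b-y*a)*(x*b-y*a)))).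
    { intros x y. unfold D; cbn [fst snd]. rewrite pnorm2. f_equal.
      match goal with |- ?L = ?R => assert (E: L - R = (d*(x*b-y*a))*(d*(x*b-y*a))*(a*a+b*b-1)) by ring end.
      rewrite Hu in E. lra. }
    assert (HTle : forall x y, pnorm q (T (x,y)) <= sqrt (x*x+y*y - d*(2-d)*((x*b-y*a)*(x*b-y*a)))).
    { intros x y. unfold T. rewrite pnorm_scal by auto. rewrite <- HDn.
      rewrite Rabs_right by (apply Rle_ge, Rlt_le, Rinv_0_lt_compat; lra).
      pose proof (HN (D (x,y))). apply Rmult_le_reg_l with M. lra.
      rewrite <- Rmult_assoc, Rinv_r by lra. lra. }
    assert (Hlin : is_linear T).
    { split.
      - intros [x1 y1] [x2 y2]. unfold T, D, vscal, vadd; simpl. f_equal; ring.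
      - intros c [x y]. unfold T, D, vscal; simpl. f_equal; ring. }
    assert (Hop : opnorm_eq (Fin 2) q T 1).
    { split.
      - intros t [[x y] [Hx ->]]. apply sq_of_norm1 in Hx.
        eapply Rle_trans. apply HTle. rewrite <- sqrt_1. apply sqrt_le_1_alt.
        assert (0 <= d*(2-d)) by nra.
        pose proof (Rmult_le_pos _ _ H0 (Rle_0_sqr (x*b-y*a))). unfold Rsqr in *. lra.
      - intros c Hc. apply Hc. exists (a,b). split. apply norm1_of_sq; auto.
        unfold T. replace (D (a,b)) with (a,b) by (unfold D; simpl; f_equal; ring).
        rewrite pnorm_scal by auto. rewrite HuM.
        rewrite Rabs_right by (apply Rle_ge, Rlt_le, Rinv_0_lt_compat; lra). field; lra. }
    assert (Hw : pnorm (Fin 2) (b, -a) = 1) by (apply norm1_of_sq; lra).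
    assert (HTw : pnorm q (T (b,-a)) > 1 - eta).
    { unfold T. replace (D (b,-a)) with (vscal (1-d) (b,-a))
        by (assert (Hs: b*b - (-a)*a = 1) by lra; unfold D; cbn [fst snd]; rewrite Hs;
            unfold vscal; simpl; f_equal; ring).
      rewrite !pnorm_scal by auto. rewrite pnorm_rot, HuM.
      rewrite (Rabs_right (/M)) by (apply Rle_ge, Rlt_le, Rinv_0_lt_compat; lra).
      rewrite (Rabs_right (1-d)) by lra.
      replace (/M * ((1-d)*M)) with (1-d) by (field; lra). lra. }
    destruct (HH T (b,-a) Hlin Hop Hw HTw) as [[x y] [Hx1 [HTx1 Hdist]]].
    apply sq_of_norm1 in Hx1.
    pose proof (HTle x y) as Hle. rewrite HTx1 in Hle.
    assert (Hs : (x*b-y*a)*(x*b-y*a) = 0).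
    { rewrite <- sqrt_1 in Hle.
      assert (0 < d*(2-d)) by (apply Rmult_lt_0_compat; lra).
      assert (0 <= (x*b-y*a)*(x*b-y*a)) by (pose proof (Rle_0_sqr (x*b-y*a)); unfold Rsqr in *; lra).
      destruct (Rle_lt_dec 0 (x*x+y*y - d*(2-d)*((x*b-y*a)*(x*b-y*a)))) as [Hp|Hp].
      - apply sqrt_le_0 in Hle; [|lra|lra]. apply Rle_antisym; [|lra].
        apply Rmult_le_reg_l with (d*(2-d)); [lra|]. rewrite Rmult_0_r. lra.
      - rewrite (sqrt_neg_0 _ (Rlt_le _ _ Hp)) in Hle. rewrite sqrt_1 in Hle. lra. }
    assert (Hs0 : x*b-y*a = 0) by nra.
    unfold vsub in Hdist; cbn [fst snd] in Hdist. rewrite pnorm2 in Hdist.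
    replace ((x-b)*(x-b)+(y- -a)*(y- -a)) with 2 in Hdist by nra.
    rewrite <- sqrt_1 in Hdist. apply sqrt_lt_0_alt in Hdist. lra.
  - set (T := vscal (/M)).
    assert (HiM : 0 < /M) by (apply Rinv_0_lt_compat; lra).
    assert (Hlin : is_linear T).
    { split.
      - intros [x1 y1] [x2 y2]. unfold T, vscal, vadd; simpl. f_equal; ring.
      - intros c [x y]. unfold T, vscal; simpl. f_equal; ring. }
    assert (Hop : opnorm_eq (Fin 2) q T 1).
    { split.
      - intros t [x [Hx ->]]. unfold T. rewrite pnorm_scal by auto.
        rewrite Rabs_right by lra. pose proof (HMx x Hx).
        apply Rmult_le_reg_l with M. lra. rewrite <- Rmult_assoc, Rinv_r by lra. lra.
      - intros c Hc. assert (HMc : M <= M * c).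
        { apply HMl. intros t [x [Hx ->]].
          assert (Hc' := Hc (/M * pnorm q x)). 
          assert (/M * pnorm q x <= c).
          { apply Hc'. exists x. split; auto. unfold T. rewrite pnorm_scal by auto.
            rewrite Rabs_right by lra. reflexivity. }
          apply Rmult_le_reg_l with (/M). lra. rewrite <- Rmult_assoc, Rinv_l by lra. lra. }
        nra. }
    assert (Hx0 : exists x0, pnorm (Fin 2) x0 = 1 /\ pnorm q x0 > M * (1 - eta)).
    { apply NNPP. intros Hn. assert (M <= M*(1-eta)).
      { apply HMl. intros t [x [Hx ->]]. apply Rnot_gt_le. intros Hg. apply Hn. exists x; auto. }
      nra. }
    destruct Hx0 as [x0 [Hx0 Hgt]].
    assert (HT0 : pnorm q (T x0) > 1 - eta).
    { unfold T. rewrite pnorm_scal by auto. rewrite Rabs_right by lra.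
      apply Rmult_lt_reg_l with M. lra. rewrite <- Rmult_assoc, Rinv_r by lra. lra. }
    destruct (HH T x0 Hlin Hop Hx0 HT0) as [x1 [Hx1 [HTx1 _]]].
    apply Hno. exists x1. split; auto.
    unfold T in HTx1. rewrite pnorm_scal in HTx1 by auto. rewrite Rabs_right in HTx1 by lra.
    apply Rmult_eq_reg_l with (/M). rewrite Rinv_l by lra. lra. lra.
Qed.
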